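(* Let $\Omega$ be a set and let $G=H\times K\leq{\rm Sym}(\Omega)$ be finite, the internal direct product of subgroups $H,K$ with $\gcd(|H|,|K|)=1$, and suppose $H$ is abelian. Let $\overline{\Omega}=\{\alpha^H\mid\alpha\in\Omega\}$ be the set of $H$-orbits, on which $K$ acts by $(\alpha^H)^k=(\alpha^k)^H$. Suppose $H^{(2),\Omega}=H$ and $K^{(2),\overline{\Omega}}=K$. Then $G^{(2),\Omega}=G$.
   Context: Permutations act on the right. For $X\leq{\rm Sym}(\Omega)$, the $2$-closure of $X$ on $\Omega$ is $X^{(2),\Omega}=\{\theta\in{\rm Sym}(\Omega)\mid \forall \alpha,\beta\in\Omega\ \exists g\in X:\ \alpha^\theta=\alpha^g,\ \beta^\theta=\beta^g\}$. Here $K^{(2),\overline{\Omega}}$ is the $2$-closure on $\overline{\Omega}$ of the permutation group induced by $K$ on $\overline{\Omega}$, and $K^{(2),\overline{\Omega}}=K$ means that this induced group coincides with its $2$-closure (with $K$ identified with its image). *)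

(* Defs.v *)
(* A permutation group G <= Sym(Omega) on an arbitrary set
   (type) Omega is modelled as a finite group acting faithfully on Omega. *)
From mathcomp Require Import all_boot all_fingroup all_solvable.
From Stdlib Require Import ClassicalEpsilon.

Set Implicit Arguments.
Unset Strict Implicit.
Unset Printing Implicit Defensive.

Local Open Scope group_scope.

Section Defs.
Variables (T : Type) (gT : finGroupType).

Definition is_right_action (to : T -> gT -> T) : Prop :=
  (forall x, to x 1 = x) /\ (forall x a b, to x (a * b) = to (to x a) b).

Definition faithful_on (to : T -> gT -> T) (X : {set gT}) : Prop :=
  forall g, g \in X -> (forall x, to x g = x) -> g = 1.

Definition induced_by (to : T -> gT -> T) (X : {set gT}) (theta : T -> T) : Prop :=
  exists2 g, g \in X & forall x, theta x = to x g.

Definition in_2closure (to : T -> gT -> T) (X : {set gT}) (theta : T -> T) : Prop :=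
  bijective theta /\
  forall a b, exists2 g, g \in X & theta a = to a g /\ theta b = to b g.

Definition two_closed (to : T -> gT -> T) (X : {set gT}) : Prop :=
  forall theta : T -> T, in_2closure to X theta <-> induced_by to X theta.

Definition horbit (to : T -> gT -> T) (H : {set gT}) (a : T) : T -> Prop :=
  fun b => exists2 h, h \in H & b = to a h.

Definition Obar (to : T -> gT -> T) (H : {set gT}) : Type :=
  {A : T -> Prop | exists a, A = horbit to H a}.

Definition horb (to : T -> gT -> T) (H : {set gT}) (a : T) : Obar to H :=
  exist _ (horbit to H a) (ex_intro _ a erefl).

Definition orep (to : T -> gT -> T) (H : {set gT}) (A : Obar to H) : T :=
  proj1_sig (constructive_indefinite_description _ (proj2_sig A)).

Definition bar_act (to : T -> gT -> T) (H : {set gT}) (A : Obar to H) (k : gT)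
  : Obar to H := horb to H (to (orep A) k).

End Defs.

(* Main.v *)
Require Import Defs.
From mathcomp Require Import all_boot all_fingroup all_solvable.
From Stdlib Require Import ClassicalEpsilon ProofIrrelevance FunctionalExtensionality PropExtensionality.

Local Open Scope group_scope.

Lemma horb_orep (T : Type) (gT : finGroupType) (to : T -> gT -> T) (H : {set gT})
  (A : Obar to H) : horb to H (orep A) = A.
Proof.
have e := proj2_sig (constructive_indefinite_description _ (proj2_sig A)).
rewrite /orep /horb; case: A e => P p /= e.
by apply: ProofIrrelevanceTheory.subset_eq_compat; rewrite -e.
Qed.

Lemma horbE (T : Type) (gT : finGroupType) (to : T -> gT -> T) (H : {set gT}) x y :
  horb to H x = horb to H y <-> horbit to H x = horbit to H y.
Proof.
split; first by move=> e; have := f_equal (@proj1_sig _ _) e.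
by move=> e; apply: ProofIrrelevanceTheory.subset_eq_compat.
Qed.

Theorem mainTheorem5 (T : Type) (gT : finGroupType) (to : T -> gT -> T)
    (G H K : {group gT}) :
  is_right_action to ->
  faithful_on to G ->
  (H \x K = G)%g ->
  coprime #|H| #|K| ->
  abelian H ->
  two_closed to H ->
  two_closed (bar_act (to := to) (H := H)) K ->
  two_closed to G.
Proof.
move=> [act1 actM] _ dp cop _ cH cK.
have [_ HKG cKH _] := dprodP dp.
have [nHG _] := dprod_normal2 dp.
have sHG : H \subset G by rewrite -HKG mulG_subl.
have sKG : K \subset G by rewrite -HKG mulG_subr.
have comm : forall h k, h \in H -> k \in K -> h * k = k * h.
  by move=> h k hH kK; have := (centsP cKH) k kK h hH.
have toV : forall x g, to (to x g) g^-1 = x by move=> x g; rewrite -actM mulgV act1.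
have toVV : forall x g, to (to x g^-1) g = x by move=> x g; rewrite -actM mulVg act1.
have horbitH : forall x h, h \in H -> horbit to H (to x h) = horbit to H x.
  move=> x h hH; apply: functional_extensionality => y.
  apply: propositional_extensionality; split.
    by case=> h' h'H ->; exists (h * h'); rewrite ?groupM // actM.
  case=> h' h'H ->; exists (h^-1 * h'); rewrite ?groupM ?groupV //.
  by rewrite -actM mulKVg.
have horbH : forall x h, h \in H -> horb to H (to x h) = horb to H x.
  by move=> x h hH; apply/horbE; apply: horbitH.
have horb_eq : forall x y, horb to H x = horb to H y -> exists2 h, h \in H & y = to x h.
  move=> x y /horbE e.
  have : horbit to H y y by exists 1; rewrite ?group1 ?act1.
  by rewrite -e.
pose P (phi : T -> T) := forall a b, exists2 g, g \in G & phi a = to a g /\ phi b = to b g.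
have compat : forall phi, P phi -> forall x y, horb to H x = horb to H y ->
    horb to H (phi x) = horb to H (phi y).
  move=> phi Pphi x y /horb_eq [h hH ->].
  have [g gG [-> ->]] := Pphi x (to x h).
  rewrite -actM conjgC actM (horbH _ (h ^ g)) //.
  by rewrite memJ_norm // (subsetP (normal_norm nHG)).
have Pto : forall g, g \in G -> P (fun x => to x g).
  by move=> g gG a b; exists g.
have fixK : forall a h k, h \in H -> k \in K -> to a k = to a h -> to a k = a.
  move=> a h k hH kK e.
  have en : forall n, to a (k ^+ n) = to a (h ^+ n).
    elim=> [|n IH]; first by rewrite !expg0.
    rewrite expgS actM e -actM comm ?groupX // actM IH -actM -expgSr //.
  have fixn : forall y n, to a y = a -> to a (y ^+ n) = a.
    by move=> y n ey; elim: n => [|n IH]; rewrite ?expg0 ?act1 // expgS actM ey.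
  have ehm : to a (h ^+ #[k]) = a by rewrite -en expg_order act1.
  have cop' : coprime #[h] #[k].
    exact: coprime_dvdl (order_dvdG hH) (coprime_dvdr (order_dvdG kK) cop).
  have : generator <[h]> (h ^+ #[k]) by rewrite generator_coprime.
  rewrite /generator => /eqP egen.
  have : h \in <[h ^+ #[k]]> by rewrite -egen cycle_id.
  case/cycleP=> j ej; rewrite e ej; exact: fixn.
move=> theta; split; last first.
  case=> g gG eth; split; last by move=> a b; exists g; rewrite ?eth.
  by exists (fun x => to x g^-1) => x; rewrite eth ?toV // -{2}(invgK g) toV.
case=> bth Pth.
have [thinv th1 th2] := bth.
have Pinv : P thinv.
  move=> a b; have [g gG [ea eb]] := Pth (thinv a) (thinv b).
  exists g^-1; rewrite ?groupV //.
  by rewrite -{2}(th2 a) -{2}(th2 b) ea eb !toV.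
pose tb (A : Obar to H) := horb to H (theta (orep A)).
pose tbi (A : Obar to H) := horb to H (thinv (orep A)).
have cl : in_2closure (bar_act (to := to) (H := H)) K tb.
  split.
    exists tbi => A; rewrite /tb /tbi.
      rewrite (compat _ Pinv _ (theta (orep A))) ?horb_orep // th1 horb_orep //.
    rewrite (compat _ Pth _ (thinv (orep A))) ?horb_orep // th2 horb_orep //.
  move=> A B; have [g gG [ea eb]] := Pth (orep A) (orep B).
  have [h [k [hH kK eg _]]] := mem_dprod dp gG.
  rewrite eg in ea eb.
  exists k => //; rewrite /tb /bar_act ea eb comm // !actM !(horbH _ h hH) //.
have [k0 k0K ek0] := (cK tb).1 cl.
have k0G : k0 \in G by apply: (subsetP sKG).
have ethk : forall x, horb to H (theta x) = horb to H (to x k0).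
  move=> x; have := ek0 (horb to H x); rewrite /tb /bar_act.
  rewrite (compat _ Pth _ x) ?horb_orep // => ->.
  by apply: (compat _ (Pto _ k0G)); rewrite horb_orep.
pose th' x := to (theta x) k0^-1.
have eorb : forall x, horb to H (th' x) = horb to H x.
  move=> x; rewrite /th' (compat _ (Pto _ (groupVr k0G)) _ (to x k0)) ?toV //.
have cl' : in_2closure to H th'.
  split.
    exists (fun x => thinv (to x k0)) => x; rewrite /th'.
      by rewrite toVV th1.
    by rewrite th2 toV.
  move=> a b; have [g gG [ea eb]] := Pth a b.
  have [h [k [hH kK eg _]]] := mem_dprod dp gG.
  rewrite eg in ea eb.
  have k1K : k * k0^-1 \in K by rewrite groupM ?groupV.
  have key : forall x, theta x = to x (h * k) -> th' x = to x h.
    move=> x ex; have [h2 h2H e2] := horb_eq _ _ (esym (eorb x)).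
    move: e2; rewrite /th' ex -!actM -mulgA comm // actM => e2.
    have e3 : to x (k * k0^-1) = to x (h2 * h^-1).
      by rewrite -(toV (to x (k * k0^-1)) h) e2 -actM.
    rewrite (fixK _ _ _ _ k1K e3) //.
    by rewrite groupM ?groupV.
  by exists h => //; rewrite !key.
have [h0 h0H eh0] := (cH th').1 cl'.
exists (h0 * k0); first by rewrite groupM // (subsetP sHG).
by move=> x; rewrite actM -eh0 /th' toVV.
Qed.
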